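(* Let $h>0$, $n\in\mathbb{N}$, and let $\lambda:\mathbb{T}\to\mathbb{R}$ be an $n$-cycle with values $\lambda_0,\dots,\lambda_{n-1}\in\mathbb{R}\setminus\{\pm\tfrac1h\}$, such that $0<|e_{\lambda}(nh)|\neq1$ and $0<|e_{-\lambda}(nh)|\neq1$. Let $f:\mathbb{T}\to\mathbb{R}$ be arbitrary. Then the non-homogeneous equation $$\Delta_h^2 y(t)+\bigl[\Delta_h\lambda(t)-\lambda(t)\lambda(t+h)\bigr]y(t)=f(t),\qquad t\in\mathbb{T},$$ has Hyers–Ulam stability on $\mathbb{T}$ with Hyers–Ulam stability constant $L=K_0(\lambda)K_0(-\lambda)$.
   Context: Fix $h>0$ and let $\mathbb{T}=\{0,h,2h,3h,\dots\}$. For $x:\mathbb{T}\to\mathbb{R}$, $\Delta_h x(t)=\frac{x(t+h)-x(t)}{h}$ and $\Delta_h^2x=\Delta_h(\Delta_h x)$, $\Delta_h^3x=\Delta_h(\Delta_h^2 x)$. An $n$-cycle is a function $\mu:\mathbb{T}\to\mathbb{R}$ with $\mu(t)=\mu_k$ whenever $t/h\equiv k\pmod n$, $k\in\{0,\dots,n-1\}$, which has period $n$ and no smaller period. For such $\mu$ define the discrete exponential $e_\mu(t)=\prod_{k=0}^{t/h-1}(1+h\mu(kh))$ (empty product $=1$), so $e_\mu(nh)=\prod_{k=0}^{n-1}(1+h\mu_k)$. For $k\in\{0,\dots,n-1\}$ define $$S_k(\mu)=\sum_{j=1}^{n}\prod_{i=0}^{j-1}\frac{1}{|1+h\mu_{(k+i)\bmod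 n}|},$$ (e.g. $S_0(\mu)=\frac{1}{|1+h\mu_0|}+\frac{1}{|1+h\mu_0||1+h\mu_1|}+\dots+\frac{1}{|1+h\mu_0|\cdots|1+h\mu_{n-1}|}$), and, when $0<|e_\mu(nh)|\neq1$, $$K_0(\mu)=\frac{h|e_\mu(nh)|}{\bigl|1-|e_\mu(nh)|\bigr|}\max\{S_0(\mu),\dots,S_{n-1}(\mu)\}.$$ Here $-\lambda$ denotes the $n$-cycle with values $-\lambda_0,\dots,-\lambda_{n-1}$. Hyers–Ulam stability: an equation $\mathcal{L}[y](t)=f(t)$, $t\in\mathbb{T}$ (with $\mathcal{L}$ a linear difference operator) has Hyers–Ulam stability on $\mathbb{T}$ with Hyers–Ulam stability constant $K>0$ if for every $\varepsilon>0$ and every $\xi:\mathbb{T}\to\mathbb{R}$ with $|\mathcal{L}[\xi](t)-f(t)|\le\varepsilon$ for all $t\in\mathbb{T}$, there is a solution $y:\mathbb{T}\to\mathbb{R}$ of the equation with $|\xi(t)-y(t)|\le K\varepsilon$ for all $t\in\mathbb{T}$. The minimum Hyers–Ulam stability constant is the smallest such $K$. *)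

(* Defs.v *)
From Stdlib Require Import Reals Lra Lia List.
Open Scope R_scope.

(* The time scale T = {0, h, 2h, ...} is indexed by k : nat, t = k*h.
   A function x : T -> R is represented as x : nat -> R with x k = x(kh). *)

Definition dlt (h : R) (x : nat -> R) : nat -> R :=
  fun k => (x (S k) - x k) / h.

Definition is_ncycle (n : nat) (mu : nat -> R) : Prop :=
  (0 < n)%nat /\
  (forall k, mu k = mu (k mod n)%nat) /\
  (forall m, (0 < m < n)%nat -> ~ (forall k, mu (k + m)%nat = mu k)).

Definition negc (mu : nat -> R) : nat -> R := fun k => - mu k.

(* e_μ(t) = prod_{k=0}^{t/h - 1} (1 + h μ(kh)), evaluated at t = m h *)
Fixpoint dexp (h : R) (mu : nat -> R) (m : nat) : R :=
  match m with
  | O => 1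
  | S m' => dexp h mu m' * (1 + h * mu m')
  end.

Fixpoint Sprod (h : R) (n : nat) (mu : nat -> R) (k j : nat) : R :=
  match j with
  | O => 1
  | S j' => Sprod h n mu k j' * / Rabs (1 + h * mu ((k + j') mod n)%nat)
  end.

Definition Sk (h : R) (n : nat) (mu : nat -> R) (k : nat) : R :=
  fold_right Rplus 0 (map (fun j => Sprod h n mu k (S j)) (seq 0 n)).

Definition maxS (h : R) (n : nat) (mu : nat -> R) : R :=
  fold_right Rmax (Sk h n mu 0) (map (Sk h n mu) (seq 0 n)).

Definition K0 (h : R) (n : nat) (mu : nat -> R) : R :=
  h * Rabs (dexp h mu n) / Rabs (1 - Rabs (dexp h mu n)) * maxS h n mu.

Definition HU_stable (Lop : (nat -> R) -> nat -> R) (f : nat -> R) (K : R) : Prop :=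
  0 < K /\
  forall eps : R, 0 < eps ->
  forall xi : nat -> R,
    (forall k, Rabs (Lop xi k - f k) <= eps) ->
    exists y : nat -> R,
      (forall k, Lop y k = f k) /\
      (forall k, Rabs (xi k - y k) <= K * eps).

Definition Lop2 (h : R) (lam : nat -> R) (y : nat -> R) : nat -> R :=
  fun k => dlt h (dlt h y) k + (dlt h lam k - lam k * lam (S k)) * y k.

(* Main.v *)
Require Import Defs.
From Stdlib Require Import Reals Lra Lia List.
From Coquelicot Require Import Coquelicot.
Open Scope R_scope.

Lemma sum_n_front (u : nat -> R) N : sum_n u (S N) = u O + sum_n (fun m => u (S m)) N.
Proof. induction N. rewrite sum_Sn, !sum_O. reflexivity.
rewrite sum_Sn, IHN, sum_Sn. unfold plus; simpl. ring. Qed.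

Lemma ser (u : nat -> R) B : (forall m, 0 <= u m) -> (forall N, sum_n u N <= B) -> ex_series u /\ Series u <= B.
Proof. intros H0 HB.
assert (E: ex_finite_lim_seq (sum_n u)).
{ apply ex_finite_lim_seq_incr with B; auto. intro N. rewrite sum_Sn. unfold plus; simpl. specialize (H0 (S N)). lra. }
pose proof (Lim_seq_correct' _ E) as L.
assert (Hs: is_series u (Lim_seq (sum_n u))) by exact L.
split. eexists; exact Hs.
rewrite (is_series_unique _ _ Hs).
pose proof (is_lim_seq_le _ _ _ _ HB L (is_lim_seq_const B)). simpl in H. exact H. Qed.

Definition sumL (F : nat -> R) (n : nat) : R := fold_right Rplus 0 (map F (seq 0 n)).

Lemma fold_plus (l : list R) x : fold_right Rplus x l = fold_right Rplus 0 l + x.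
Proof. induction l; simpl; [ring|rewrite IHl; ring]. Qed.

Lemma sumL_S_back F n : sumL F (S n) = sumL F n + F n.
Proof. unfold sumL. rewrite seq_S, map_app, fold_right_app. simpl. rewrite fold_plus. ring. Qed.

Lemma sumL_S_front F n : sumL F (S n) = F O + sumL (fun j => F (S j)) n.
Proof. unfold sumL. simpl. rewrite <- seq_shift, map_map. reflexivity. Qed.

Lemma sumL_ext F G n : (forall j, F j = G j) -> sumL F n = sumL G n.
Proof. intro H. unfold sumL. f_equal. apply map_ext. exact H. Qed.

Lemma sumL_scal c F n : sumL (fun j => c * F j) n = c * sumL F n.
Proof. induction n. unfold sumL; simpl; ring. rewrite !sumL_S_back, IHn. ring. Qed.

Lemma sumL_nonneg F n : (forall j, 0 <= F j) -> 0 <= sumL F n.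
Proof. intro H. induction n. unfold sumL; simpl; lra. rewrite sumL_S_back. specialize (H n). lra. Qed.

Definition A (h : R) (mu : nat -> R) (i : nat) : R := Rabs (1 + h * mu i).

Fixpoint spr (h : R) (mu : nat -> R) (k j : nat) : R :=
  match j with O => 1 | S j' => spr h mu k j' * / A h mu (k + j') end.
Fixpoint pa (h : R) (mu : nat -> R) (k j : nat) : R :=
  match j with O => 1 | S j' => pa h mu k j' * A h mu (k + j') end.
Definition SK h n mu k := sumL (fun j => spr h mu k (S j)) n.

Lemma Sprod_spr h n mu k j : (forall x, mu x = mu (x mod n)%nat) -> Sprod h n mu k j = spr h mu k j.
Proof. intro Hm. induction j; simpl. reflexivity. rewrite IHj, <- Hm. reflexivity. Qed.

Lemma Sk_SK h n mu k : (forall x, mu x = mu (x mod n)%nat) -> Sk h n mu k = SK h n mu k.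
Proof. intro Hm. unfold Sk, SK, sumL. f_equal. apply map_ext. intro. apply Sprod_spr; auto. Qed.

Section S.
Variables (h : R) (mu : nat -> R).
Hypothesis Hnz : forall i, 1 + h * mu i <> 0.

Lemma A_pos i : 0 < A h mu i.
Proof. unfold A. apply Rabs_pos_lt. auto. Qed.

Lemma spr_pos k j : 0 < spr h mu k j.
Proof. induction j; simpl. lra. pose proof (A_pos (k+j)). apply Rmult_lt_0_compat; auto. apply Rinv_0_lt_compat; auto. Qed.

Lemma pa_pos k j : 0 < pa h mu k j.
Proof. induction j; simpl. lra. pose proof (A_pos (k+j)). apply Rmult_lt_0_compat; auto. Qed.

Lemma spr_front k j : spr h mu k (S j) = / A h mu k * spr h mu (S k) j.
Proof. induction j. simpl. rewrite Nat.add_0_r. ring.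
change (spr h mu k (S (S j))) with (spr h mu k (S j) * / A h mu (k + S j)).
rewrite IHj. simpl. rewrite Nat.add_succ_r. ring. Qed.

Lemma pa_front k j : pa h mu k (S j) = A h mu k * pa h mu (S k) j.
Proof. induction j. simpl. rewrite Nat.add_0_r. ring.
change (pa h mu k (S (S j))) with (pa h mu k (S j) * A h mu (k + S j)).
rewrite IHj. simpl. rewrite Nat.add_succ_r. ring. Qed.

Lemma spr_pa k j : spr h mu k j * pa h mu k j = 1.
Proof. induction j; simpl. ring. pose proof (A_pos (k+j)).
replace (spr h mu k j * / A h mu (k + j) * (pa h mu k j * A h mu (k + j))) with (spr h mu k j * pa h mu k j) by (field; lra). auto. Qed.

Variable n : nat.
Hypothesis Hper : forall k, mu (k + n)%nat = mu k.

Lemma pa_shift k : pa h mu (S k) n = pa h mu k n.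
Proof. pose proof (pa_front k n). change (pa h mu k (S n)) with (pa h mu k n * A h mu (k + n)) in H.
assert (E: A h mu (k+n) = A h mu k) by (unfold A; rewrite Hper; reflexivity). rewrite E in H.
pose proof (A_pos k). apply (Rmult_eq_reg_l (A h mu k)); lra. Qed.

Lemma pa_shift0 k : pa h mu k n = pa h mu 0 n.
Proof. induction k. reflexivity. rewrite pa_shift. auto. Qed.

Lemma spr_n k : spr h mu k n = / pa h mu 0 n.
Proof. rewrite <- (pa_shift0 k). pose proof (spr_pa k n). pose proof (pa_pos k n).
apply (Rmult_eq_reg_r (pa h mu k n)); [|lra]. rewrite H. field. lra. Qed.

Hypothesis Hn : (0 < n)%nat.

Lemma SK_id k : A h mu k * SK h n mu k = 1 + SK h n mu (S k) - / pa h mu 0 n.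
Proof. unfold SK. rewrite (sumL_ext _ (fun j => / A h mu k * spr h mu (S k) j)) by (intro; apply spr_front).
rewrite sumL_scal. pose proof (spr_n (S k)) as Hs. pose proof (A_pos k). rewrite <- Hs. clear Hs. destruct n as [|n']. lia.
rewrite sumL_S_front, (sumL_S_back (fun j => spr h mu (S k) (S j))).
simpl (spr h mu (S k) 0). field. lra. Qed.

Lemma SK_pos k : 0 < SK h n mu k.
Proof. unfold SK. destruct n as [|n']. lia. rewrite sumL_S_back.
pose proof (sumL_nonneg (fun j => spr h mu k (S j)) n' (fun j => Rlt_le _ _ (spr_pos k (S j)))).
pose proof (spr_pos k (S n')). lra. Qed.
End S.

Lemma dexp_pa h mu m : Rabs (dexp h mu m) = pa h mu 0 m.
Proof. induction m; simpl. apply Rabs_R1. rewrite Rabs_mult, IHm. reflexivity. Qed.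

Fixpoint Qf (a : nat -> R) (k m : nat) : R :=
  match m with O => / a k | S m' => / a k * Qf a (S k) m' end.

Lemma first_order (h : R) (n : nat) (mu g x : nat -> R) (eps M : R) :
  0 < h -> (0 < n)%nat -> (forall k, mu (k + n)%nat = mu k) -> (forall k, 1 + h * mu k <> 0) ->
  pa h mu 0 n <> 1 -> (forall k, SK h n mu k <= M) ->
  (forall k, Rabs (dlt h x k - mu k * x k - g k) <= eps) ->
  exists z, (forall k, dlt h z k = mu k * z k + g k) /\
    (forall k, Rabs (x k - z k) <= h * pa h mu 0 n / Rabs (1 - pa h mu 0 n) * M * eps).
Proof.
intros hpos npos Hper Hnz Hp1 HM Hx.
set (p := pa h mu 0 n).
assert (pp : 0 < p) by apply pa_pos, Hnz.
assert (epos : 0 <= eps) by (specialize (Hx O); pose proof (Rabs_pos (dlt h x 0 - mu 0%nat * x 0%nat - g 0%nat)); lra).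
set (a := fun k => 1 + h * mu k).
set (r := fun k => x (S k) - a k * x k - h * g k).
assert (Hr : forall k, Rabs (r k) <= h * eps).
{ intro k. replace (r k) with (h * (dlt h x k - mu k * x k - g k)) by (unfold r, a, dlt; field; lra).
  rewrite Rabs_mult, (Rabs_pos_eq h) by lra. apply Rmult_le_compat_l; auto; lra. }
assert (Ha : forall k, Rabs (a k) = A h mu k) by reflexivity.
assert (HAp : forall k, 0 < A h mu k) by (intro; apply A_pos, Hnz).
assert (Hid : forall k, A h mu k * SK h n mu k = 1 + SK h n mu (S k) - / p) by (intro; apply SK_id; auto).
assert (HSK : forall k, 0 < SK h n mu k) by (intro; apply SK_pos; auto).
assert (Hw : exists w : nat -> R, (forall k, w (S k) = a k * w k + r k) /\
   (forall k, Rabs (w k) <= h * eps * (p * SK h n mu k / Rabs (1 - p)))).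
{ destruct (Rlt_or_le p 1) as [Hlt|Hge].
  - rewrite Rabs_pos_eq by lra.
    exists (fix w (k : nat) : R := match k with O => 0 | S k' => a k' * w k' + r k' end).
    split. intro; reflexivity.
    induction k.
    + rewrite Rabs_R0. apply Rmult_le_pos. nra. apply Rmult_le_pos. pose proof (HSK O). nra. apply Rlt_le, Rinv_0_lt_compat. lra.
    + set (w := (fix w (k : nat) : R := match k with O => 0 | S k' => a k' * w k' + r k' end)) in *.
      change (w (S k)) with (a k * w k + r k).
      assert (E : A h mu k * (p * SK h n mu k / (1 - p)) + 1 = p * SK h n mu (S k) / (1 - p)).
      { replace (A h mu k * (p * SK h n mu k / (1 - p))) with (p * (A h mu k * SK h n mu k) / (1 - p)) by (field; lra).
        rewrite Hid. field. lra. }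
      pose proof (Rabs_triang (a k * w k) (r k)). rewrite Rabs_mult, Ha in H.
      pose proof (Rmult_le_compat_l _ _ _ (Rlt_le _ _ (HAp k)) IHk).
      specialize (Hr k). rewrite <- E.
      replace (h * eps * (A h mu k * (p * SK h n mu k / (1 - p)) + 1)) with
        (A h mu k * (h * eps * (p * SK h n mu k / (1 - p))) + h * eps) by ring. lra.
  - assert (Hgt : 1 < p) by (destruct Hge; [auto| exfalso; apply Hp1; auto]).
    rewrite Rabs_left1 by lra. replace (- (1 - p)) with (p - 1) by ring.
    set (V := fun k => p * SK h n mu k / (p - 1)).
    assert (HV0 : forall k, 0 <= V k).
    { intro k. unfold V. apply Rmult_le_pos. pose proof (HSK k). nra. apply Rlt_le, Rinv_0_lt_compat. lra. }
    assert (EV : forall k, A h mu k * V k = 1 + V (S k)).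
    { intro k. unfold V. replace (A h mu k * (p * SK h n mu k / (p - 1))) with (p * (A h mu k * SK h n mu k) / (p - 1)) by (field; lra).
      rewrite Hid. field. lra. }
    set (c := fun k m => Qf a k m * r (k + m)%nat).
    assert (Hc0 : forall k, c k O = / a k * r k) by (intro k; unfold c; simpl; rewrite Nat.add_0_r; reflexivity).
    assert (HcS : forall k m, c k (S m) = / a k * c (S k) m).
    { intros k m. unfold c. simpl. rewrite Nat.add_succ_r. simpl. ring. }
    assert (Hanz : forall k, a k <> 0) by exact Hnz.
    assert (Hbound : forall N k, sum_n (fun m => Rabs (c k m)) N <= h * eps * V k).
    { induction N; intro k.
      - rewrite sum_O, Hc0, Rabs_mult, Rabs_inv, Ha.
        pose proof (EV k). pose proof (HV0 (S k)). pose proof (HAp k). specialize (Hr k).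
        apply (Rmult_le_reg_l (A h mu k)); auto.
        replace (A h mu k * (/ A h mu k * Rabs (r k))) with (Rabs (r k)) by (field; lra).
        replace (A h mu k * (h * eps * V k)) with (h * eps * (A h mu k * V k)) by ring. rewrite H.
        assert (0 <= h * eps * V (S k)) by (apply Rmult_le_pos; nra). nra.
      - rewrite sum_n_front.
        assert (E : sum_n (fun m => Rabs (c k (S m))) N = / A h mu k * sum_n (fun m => Rabs (c (S k) m)) N).
        { clear IHN. induction N. rewrite !sum_O, HcS, Rabs_mult, Rabs_inv, Ha. reflexivity.
          rewrite !sum_Sn, IHN. unfold plus; simpl. rewrite HcS, Rabs_mult, Rabs_inv, Ha. ring. }
        rewrite E, Hc0, Rabs_mult, Rabs_inv, Ha.
        pose proof (IHN (S k)). pose proof (EV k). pose proof (HAp k). specialize (Hr k).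
        apply (Rmult_le_reg_l (A h mu k)); auto.
        replace (A h mu k * (/ A h mu k * Rabs (r k) + / A h mu k * sum_n (fun m : nat => Rabs (c (S k) m)) N))
          with (Rabs (r k) + sum_n (fun m : nat => Rabs (c (S k) m)) N) by (field; lra).
        replace (A h mu k * (h * eps * V k)) with (h * eps * (A h mu k * V k)) by ring. rewrite H0. nra. }
    assert (Hser : forall k, ex_series (fun m => Rabs (c k m)) /\ Series (fun m => Rabs (c k m)) <= h * eps * V k).
    { intro k. apply ser. intro; apply Rabs_pos. intro N; apply Hbound. }
    exists (fun k => - Series (c k)). split.
    + intro k. destruct (Hser k) as [Hex _].
      rewrite (Series_incr_1 (c k)) by (apply ex_series_Rabs; auto).
      rewrite (Series_ext (fun m => c k (S m)) (fun m => / a k * c (S k) m)) by (intro; apply HcS).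
      rewrite Series_scal_l, Hc0. field. auto.
    + intro k. destruct (Hser k) as [Hex Hle]. rewrite Rabs_Ropp.
      eapply Rle_trans. apply Series_Rabs; auto. exact Hle. }
destruct Hw as [w [Hw1 Hw2]].
exists (fun k => x k - w k). split.
- intro k. unfold dlt. rewrite Hw1.
  replace (x (S k)) with (r k + a k * x k + h * g k) by (unfold r; ring).
  unfold a. field. lra.
- intro k. replace (x k - (x k - w k)) with (w k) by ring.
  eapply Rle_trans. apply Hw2.
  assert (Hq : 0 < Rabs (1 - p)) by (apply Rabs_pos_lt; intro E; apply Hp1; fold p; lra).
  replace (h * eps * (p * SK h n mu k / Rabs (1 - p))) with ((h * p / Rabs (1 - p) * eps) * SK h n mu k) by (field; lra).
  replace (h * p / Rabs (1 - p) * M * eps) with ((h * p / Rabs (1 - p) * eps) * M) by ring.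
  apply Rmult_le_compat_l; auto.
  apply Rmult_le_pos; auto. apply Rmult_le_pos. nra. apply Rlt_le, Rinv_0_lt_compat; auto.
Qed.

Lemma mod_per (n : nat) (mu : nat -> R) : (0 < n)%nat -> (forall x, mu x = mu (x mod n)%nat) -> forall k, mu (k + n)%nat = mu k.
Proof. intros Hn Hm k. rewrite (Hm (k+n)%nat), (Hm k). f_equal.
replace (k + n)%nat with (k + 1 * n)%nat by lia. apply Nat.Div0.mod_add. Qed.

Lemma fold_max_ge (F : nat -> R) init l x : In x l -> F x <= fold_right Rmax init (map F l).
Proof. induction l; simpl. tauto. intros [E|H]. subst. apply Rmax_l.
eapply Rle_trans. apply IHl; auto. apply Rmax_r. Qed.

Lemma spr_ext h mu mu' k k' j : (forall i, mu (k + i)%nat = mu' (k' + i)%nat) -> spr h mu k j = spr h mu' k' j.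
Proof. intro H. induction j; simpl. reflexivity. rewrite IHj. unfold A. rewrite H. reflexivity. Qed.

Lemma SK_le_maxS h n mu : (0 < n)%nat -> (forall x, mu x = mu (x mod n)%nat) -> forall k, SK h n mu k <= maxS h n mu.
Proof. intros Hn Hm k.
assert (E : SK h n mu k = SK h n mu (k mod n)).
{ unfold SK. apply sumL_ext. intro j. apply spr_ext. intro i. rewrite (Hm (k+i)%nat), (Hm (k mod n + i)%nat).
  f_equal. rewrite Nat.Div0.add_mod_idemp_l. reflexivity. }
rewrite E, <- Sk_SK by auto. unfold maxS. apply fold_max_ge. apply in_seq.
pose proof (Nat.mod_upper_bound k n). lia. Qed.

Lemma spr_S h mu k j : spr h (fun i => mu (S i)) k j = spr h mu (S k) j.
Proof. apply spr_ext. intro; reflexivity. Qed.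

Lemma pa_S h mu k j : pa h (fun i => mu (S i)) k j = pa h mu (S k) j.
Proof. induction j; simpl. reflexivity. rewrite IHj. reflexivity. Qed.

Theorem theorem3p4 (h : R) (n : nat) (lam f : nat -> R) :
  0 < h ->
  is_ncycle n lam ->
  (forall k, (k < n)%nat -> lam k <> 1 / h /\ lam k <> - (1 / h)) ->
  0 < Rabs (dexp h lam n) -> Rabs (dexp h lam n) <> 1 ->
  0 < Rabs (dexp h (negc lam) n) -> Rabs (dexp h (negc lam) n) <> 1 ->
  HU_stable (Lop2 h lam) f (K0 h n lam * K0 h n (negc lam)).
Proof.
intros hpos [Hn [Hm _]] Hl Hp1 Hp1' Hq1 Hq1'.
rewrite dexp_pa in Hp1, Hp1', Hq1, Hq1'.
assert (Hmn : forall x, negc lam x = negc lam (x mod n)%nat) by (intro; unfold negc; rewrite <- Hm; reflexivity).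
assert (Hms : forall x, lam (S x) = lam (S (x mod n))%nat).
{ intro x. rewrite (Hm (S x)), (Hm (S (x mod n))). f_equal.
  replace (S x) with (1 + x)%nat by lia. replace (S (x mod n)) with (1 + x mod n)%nat by lia.
  rewrite Nat.Div0.add_mod_idemp_r. reflexivity. }
assert (Hnz : forall k, 1 + h * lam k <> 0).
{ intros k E. destruct (Hl (k mod n)%nat) as [_ H2]. apply Nat.mod_upper_bound; lia.
  apply H2. rewrite <- Hm. apply (Rmult_eq_reg_l h); [|lra]. field_simplify; lra. }
assert (Hnz' : forall k, 1 + h * negc lam k <> 0).
{ intros k E. unfold negc in E. destruct (Hl (k mod n)%nat) as [H1 _]. apply Nat.mod_upper_bound; lia.
  apply H1. rewrite <- Hm. apply (Rmult_eq_reg_l h); [|lra]. field_simplify; lra. }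
assert (HnzS : forall k, 1 + h * lam (S k) <> 0) by (intro; apply Hnz).
assert (Kl : K0 h n lam = h * pa h lam 0 n / Rabs (1 - pa h lam 0 n) * maxS h n lam)
  by (unfold K0; rewrite dexp_pa; reflexivity).
assert (Kn : K0 h n (negc lam) = h * pa h (negc lam) 0 n / Rabs (1 - pa h (negc lam) 0 n) * maxS h n (negc lam))
  by (unfold K0; rewrite dexp_pa; reflexivity).
assert (Kpos : forall mu, (forall x, mu x = mu (x mod n)%nat) -> (forall k, 1 + h * mu k <> 0) ->
  pa h mu 0 n <> 1 -> 0 < h * pa h mu 0 n / Rabs (1 - pa h mu 0 n) * maxS h n mu).
{ intros mu Hmu Hz H1. pose proof (pa_pos h mu Hz 0 n).
  pose proof (SK_le_maxS h n mu Hn Hmu 0). pose proof (SK_pos h mu Hz n (mod_per n mu Hn Hmu) Hn 0).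
  assert (0 < Rabs (1 - pa h mu 0 n)) by (apply Rabs_pos_lt; intro E; apply H1; lra).
  apply Rmult_lt_0_compat; [|lra]. apply Rmult_lt_0_compat; [nra|]. apply Rinv_0_lt_compat; auto. }
split.
{ rewrite Kl, Kn. apply Rmult_lt_0_compat; apply Kpos; auto. }
intros eps epos xi Hxi.
set (u := fun k => dlt h xi k + lam k * xi k).
destruct (first_order h n (fun k => lam (S k)) f u eps (maxS h n lam)) as [v [Hv Hvb]]; auto.
{ exact (mod_per n (fun k => lam (S k)) Hn Hms). }
{ rewrite pa_S, (pa_shift h lam Hnz n (mod_per n lam Hn Hm)). auto. }
{ intro k. unfold SK. rewrite (sumL_ext _ (fun j => spr h lam (S k) (S j))) by (intro; apply spr_S).
  apply (SK_le_maxS h n lam Hn Hm (S k)). }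
{ intro k. replace (dlt h u k - lam (S k) * u k - f k) with (Lop2 h lam xi k - f k). auto.
  unfold Lop2, u, dlt. field. lra. }
rewrite pa_S, (pa_shift h lam Hnz n (mod_per n lam Hn Hm)), <- Kl in Hvb.
destruct (first_order h n (negc lam) v xi (K0 h n lam * eps) (maxS h n (negc lam))) as [y [Hy Hyb]]; auto.
{ exact (mod_per n (negc lam) Hn Hmn). }
{ apply SK_le_maxS; auto. }
{ intro k. replace (dlt h xi k - negc lam k * xi k - v k) with (u k - v k) by (unfold u, negc; ring). auto. }
rewrite <- Kn in Hyb.
exists y. split.
- intro k.
  assert (Ey : forall k, y (S k) = y k + h * (- lam k * y k + v k)).
  { intro j. pose proof (Hy j) as H. unfold dlt, negc in H.
    replace (y (S j)) with (y j + h * ((y (S j) - y j) / h)) by (field; lra). rewrite H. reflexivity. }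
  assert (Ev : v (S k) = v k + h * (lam (S k) * v k + f k)).
  { pose proof (Hv k) as H. unfold dlt in H.
    replace (v (S k)) with (v k + h * ((v (S k) - v k) / h)) by (field; lra). rewrite H. reflexivity. }
  unfold Lop2. change (dlt h (dlt h y) k) with ((dlt h y (S k) - dlt h y k) / h).
  rewrite !Hy. unfold negc, dlt. rewrite (Ey k), Ev. field. lra.
- intro k. eapply Rle_trans. apply Hyb. right. ring.
Qed.
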